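(* Let $I=[r,s]$ be an interval of rounds with $s\ge r$ and let $C$ be an $I$-vertex-stable strongly connected component with $|C|\ge 2$. If $s\ge r+|C|-2$, then $D(C)\le |C|-1$.
   Context: A finite set $\Pi$ of $n\ge2$ processes is given together with an infinite sequence of simple directed graphs $\mathcal{G}^1,\mathcal{G}^2,\dots$ on vertex set $\Pi$ ($\mathcal{G}^t$ is the round-$t$ communication graph). Process $p$ causally influences $q$ in round $t$ if $q=p$ or $(p\to q)\in\mathcal{G}^t$. A causal chain of length $k\ge1$ from $p$ in round $t$ to $q$ is a sequence $p=p_0,\dots,p_k=q$ with $p_i$ causally influencing $p_{i+1}$ in round $t+i$ for $0\le i<k$; the causal distance $d_t(p,q)$ is the minimum length of such a chain ($\infty$ if none). For an interval $I=[r,s]$, a set $C\subseteq\Pi$ is an $I$-vertex-stable strongly connected component if for every $p\in C$ and every round $t\in I$, the vertex set of the strongly connected component of $\mathcal{G}^t$ containing $p$ equals $C$ (the edges may change). Its round-$x$ causal diameter is $D^x(C)=\max_{p,q\in C} d_x(p,q)$, and its causal diameter is $D(C)=\max\{D^x(C): x\in[r,s],\ x+D^x(C)-1\le s\}$ if this set is nonempty, and $D(C)=\infty$ otherwise. *)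

(* Defs.v *)
From mathcomp Require Import all_boot.
From Stdlib Require Import ClassicalEpsilon.
Set Implicit Arguments. Unset Strict Implicit. Unset Printing Implicit Defensive.

Section Defs.
Variable Pi : finType.
(* G t = round-t communication graph (rounds are numbered from 1). *)
Variable G : nat -> rel Pi.

Definition influences (t : nat) (p q : Pi) : bool := (p == q) || G t p q.

Fixpoint chain (t k : nat) (p q : Pi) : bool :=
  match k with
  | 0 => p == q
  | k'.+1 => [exists x, influences t p x && chain t.+1 k' x q]
  end.

(* causal distance d_t(p,q): minimal length k >= 1 of a causal chain;
   None encodes infinity *)
Definition causal_dist (t : nat) (p q : Pi) : option nat :=
  match excluded_middle_informative
          (exists k, (fun k => (0 < k) && chain t k p q) k) with
  | left H => Some (ex_minn H)
  | right _ => None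
  end.

Definition omax (a b : option nat) : option nat :=
  match a, b with
  | Some x, Some y => Some (maxn x y)
  | _, _ => None
  end.

Definition scc (t : nat) (p : Pi) : {set Pi} :=
  [set q | connect (G t) p q && connect (G t) q p].

Definition vertex_stable_scc (r s : nat) (C : {set Pi}) : Prop :=
  forall p, p \in C -> forall t, r <= t <= s -> scc t p = C.

Definition causal_diam_at (x : nat) (C : {set Pi}) : option nat :=
  \big[omax/Some 0]_(p in C) \big[omax/Some 0]_(q in C) causal_dist x p q.

Definition admissible (s x : nat) (C : {set Pi}) : bool :=
  match causal_diam_at x C with
  | Some k => x + k - 1 <= s
  | None => false
  end.

Definition diam_val (x : nat) (C : {set Pi}) : nat :=
  if causal_diam_at x C is Some k then k else 0.

(* causal diameter D(C) over I = [r,s]; None encodes infinity *)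
Definition causal_diam (r s : nat) (C : {set Pi}) : option nat :=
  let S := [seq x <- iota r (s - r + 1) | admissible s x C] in
  if S is [::] then None else Some (\max_(x <- S) diam_val x C).

End Defs.

Definition ole (a : option nat) (b : nat) : bool :=
  if a is Some k then k <= b else false.

(* Main.v *)
Require Import Defs.
From mathcomp Require Import all_boot zify.
From Stdlib Require Import ClassicalEpsilon.
Set Implicit Arguments. Unset Strict Implicit. Unset Printing Implicit Defensive.

Section Aux.
Variable Pi : finType.
Variable G : nat -> rel Pi.

Lemma chain_snoc t k p x q :
  chain G t k p x -> influences G (t + k) x q -> chain G t k.+1 p q.
Proof.
elim: k t p => [|k IH] t p /=.
  move=> /eqP -> Hi; apply/existsP; exists q; by rewrite addn0 in Hi; rewrite Hi eqxx.
move=> /existsP[y /andP[Hpy Hyx]] Hi; apply/existsP; exists y; rewrite Hpy /=.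
by apply: IH Hyx _; rewrite addSn -addnS.
Qed.

Lemma chain_refl t j p : chain G t j p p.
Proof.
elim: j t => [|j IH] t /=; first by [].
by apply/existsP; exists p; rewrite /influences eqxx IH.
Qed.

Lemma chain_mono t j p q : chain G t j p q -> chain G t j.+1 p q.
Proof. by move=> H; apply: chain_snoc H _; rewrite /influences eqxx. Qed.

Lemma dist_le t k p q : 0 < k -> chain G t k p q ->
  exists m, causal_dist G t p q = Some m /\ m <= k.
Proof.
move=> k0 Hc; rewrite /causal_dist; case: excluded_middle_informative => [H|H].
  exists (ex_minn H); split => //; case: ex_minnP => m _ Hmin; apply: Hmin.
  by rewrite k0 Hc.
by exfalso; apply: H; exists k; rewrite k0 Hc.
Qed.

Lemma cross u (A C : {set Pi}) a b : scc G u a = C -> a \in A -> b \in C -> b \notin A ->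
  exists c d, [/\ c \in A, d \in C, d \notin A & G u c d].
Proof.
move=> HS aA bC bA.
case: (boolP [exists c, exists d, [&& c \in A, d \in C, d \notin A & G u c d]]).
  move=> /existsP[c /existsP[d /and4P[? ? ? ?]]]; by exists c, d.
move=> nE.
have H: forall l c, c \in A -> path (G u) c l -> connect (G u) a c ->
    connect (G u) (last c l) a -> last c l \in A.
  elim=> [|d l IH] c cA //= /andP[cd pl] ac la.
  have ad : connect (G u) a d by apply: connect_trans ac (connect1 cd).
  have da : connect (G u) d a.
    apply: connect_trans la; apply/connectP; by exists l.
  have dC : d \in C by rewrite -HS inE ad da.
  have dA : d \in A.
    apply/negPn/negP => dnA; move/negP: nE; apply; apply/existsP; exists c.
    by apply/existsP; exists d; rewrite cA dC dnA cd.
  exact: IH dA pl ad la.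
move: bC; rewrite -HS inE => /andP[ab ba].
case/connectP: ab => l pl lb.
have := H l a aA pl (connect0 _ _); rewrite -lb => /(_ ba) bA'.
by rewrite bA' in bA.
Qed.

Lemma diam_bound r s (C : {set Pi}) t :
  vertex_stable_scc G r s C -> 2 <= #|C| -> r <= t -> t + #|C| - 2 <= s ->
  exists k, causal_diam_at G t C = Some k /\ k <= #|C| - 1.
Proof.
move=> HC HC2 rt ts.
have key: forall p, p \in C -> forall q, q \in C ->
    exists m, causal_dist G t p q = Some m /\ m <= #|C| - 1.
  move=> p pC.
  pose R j := [set q in C | chain G t j p q].
  have grow: forall j, j < #|C| -> t + j <= s.+1 -> j.+1 <= #|R j|.
    elim=> [|j IH] jC tj.
      by rewrite card_gt0; apply/set0Pn; exists p; rewrite inE pC chain_refl.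
    have IH' : j.+1 <= #|R j|.
      by apply: IH (ltnW jC) (leq_trans _ tj); rewrite leq_add2l.
    have sub: R j \subset R j.+1.
      by apply/subsetP => q; rewrite !inE => /andP[-> /chain_mono].
    case: (ltnP j.+1 #|R j|) => hj; first by apply: leq_trans hj (subset_leq_card sub).
    have eqj : #|R j| = j.+1 by apply/eqP; rewrite eqn_leq hj IH'.
    case: (boolP (C \subset R j)) => [sCR | /subsetPn [b bC bR]].
      by have := subset_leq_card sCR; rewrite eqj leqNgt jC.
    have tjs : r <= t + j <= s.
      by rewrite (leq_trans rt (leq_addr _ _)) /= -ltnS (leq_trans _ tj) // addnS.
    have Hs := HC p pC (t + j) tjs.
    have pR : p \in R j by rewrite inE pC chain_refl.
    have [c [d [cR dC dR cd]]] := cross Hs pR bC bR.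
    have dR' : d \in R j.+1.
      move: cR; rewrite !inE dC => /andP[_ Hc]; apply: chain_snoc Hc _.
      by rewrite /influences cd orbT.
    have pr : R j \proper R j.+1 by apply/properP; split => //; exists d.
    by rewrite -[X in X < _]eqj; exact: proper_card pr.
  have C0 : 0 < #|C| by apply: leq_trans HC2.
  have Hn : #|C| <= #|R #|C|.-1|.
    have -> : #|C| = #|C|.-1.+1 by rewrite prednK.
    apply: grow; first by rewrite prednK.
    by move: ts HC2; clear; lia.
  have RC : R #|C|.-1 = C.
    apply/eqP; rewrite eqEcard Hn andbT; apply/subsetP => q; rewrite inE.
    by case/andP.
  move=> q qC; have : q \in R #|C|.-1 by rewrite RC.
  rewrite inE => /andP[_ Hc].
  have := dist_le _ Hc; rewrite subn1; apply; by rewrite -ltnS prednK.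
rewrite /causal_diam_at.
pose P (o : option nat) := exists k, o = Some k /\ k <= #|C| - 1.
have P0 : P (Some 0) by exists 0.
have PM : forall a b, P a -> P b -> P (omax a b).
  move=> a b [x [-> hx]] [y [-> hy]]; exists (maxn x y); split => //.
  by rewrite geq_max hx hy.
apply: (big_ind P) => // p pC; apply: (big_ind P) => // q qC.
have [m [-> hm]] := key p pC q qC; by exists m.
Qed.
End Aux.

Theorem lemma2 (Pi : finType) (G : nat -> rel Pi)
  (HPi : 2 <= #|Pi|) (Hsimple : forall t, irreflexive (G t))
  (r s : nat) (Hr : 1 <= r) (Hrs : r <= s) (C : {set Pi})
  (HC : vertex_stable_scc G r s C) (HC2 : 2 <= #|C|)
  (Hlen : r + #|C| - 2 <= s) :
  ole (causal_diam G r s C) (#|C| - 1).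
Proof.
have [k0 [E0 h0]] := diam_bound HC HC2 (leqnn r) Hlen.
rewrite /causal_diam.
have rin : r \in [seq x <- iota r (s - r + 1) | admissible G s x C].
  rewrite mem_filter /admissible E0 mem_iota leqnn /=.
  by apply/andP; split; move: Hlen Hrs h0 HC2; clear; lia.
move: rin; case E: (filter _ _) => [|x0 S'] // rin.
rewrite /= -E big_seq; apply: (big_ind (fun n => n <= #|C| - 1)) => //.
  by move=> a b ha hb; rewrite geq_max ha hb.
move=> x; rewrite mem_filter mem_iota /admissible /diam_val => /andP[].
case Ex: causal_diam_at => [k|] // hk /andP[rx _].
case: (leqP k (#|C| - 1)) => // hlt.
have hx : x + #|C| - 2 <= s by move: hk hlt HC2; clear; lia.
have [k' [Ek' hk']] := diam_bound HC HC2 rx hx.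
rewrite Ek' in Ex; case: Ex => E1; subst k'; by rewrite ltnNge hk' in hlt.
Qed.
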